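(* Let $r\ge 1$, let $M=(v_1,\dots,v_n)$ be a finite list of nonzero vectors generating $\mathbb{F}_2^r$, and let $G=G(\mathbb{F}_2^r,M)$. Let $c_1(G)$ be the largest invariant factor (the exponent) of the sandpile group $K(G)$. Then $$c_1(G)\ \Big|\ 2^{r-2}\operatorname{lcm}\{\lambda_u : u\in\mathbb{F}_2^r\setminus\{0\}\},$$ where $\lambda_u=n-\sum_{i=1}^n(-1)^{u\cdot v_i}$.
   Context: The Cayley graph $G$ has vertex set $\mathbb{F}_2^r$ and Laplacian $L(G)$ indexed by $\mathbb{F}_2^r$ with $L(G)_{u,u}=n$ and $L(G)_{u,w}=-\#\{i:u+v_i=w\}$ for $u\ne w$; $\operatorname{coker}L(G)\cong\mathbb{Z}\oplus K(G)$ with $K(G)$ finite abelian (the sandpile group). The numbers $\lambda_u$, $u\in\mathbb{F}_2^r$, are the eigenvalues of $L(G)$ (with eigenvector $\sum_{w}(-1)^{u\cdot w}e_w$); $\lambda_0=0$ and $\lambda_u=2\#\{i: u\cdot v_i=1\}>0$ for $u\neq0$, so the right-hand side is an integer. *)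

(* Defs.v *)
From HB Require Import structures.
From mathcomp Require Import all_boot all_order all_algebra.
Set Implicit Arguments. Unset Strict Implicit. Unset Printing Implicit Defensive.
Import Order.TTheory GRing.Theory Num.Theory.
Local Open Scope ring_scope.

Notation F2vec r := 'rV['F_2]_r.

Definition dot2 (r : nat) (u w : F2vec r) : 'F_2 := (u *m w^T) 0 0.

Definition cayley_laplacian (r n : nat) (v : 'I_n -> F2vec r)
  (u w : F2vec r) : int :=
  if u == w then n%:Z else - (#|[set i : 'I_n | u + v i == w]|%:Z).

Definition in_image (r n : nat) (v : 'I_n -> F2vec r) (x : F2vec r -> int) :=
  exists y : F2vec r -> int,
    forall u, x u = \sum_(w : F2vec r) cayley_laplacian v u w * y w.

(* the class of x in coker L is torsion, i.e. lies in K(G) *)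
Definition is_torsion (r n : nat) (v : 'I_n -> F2vec r) (x : F2vec r -> int) :=
  exists m : nat, (0 < m)%N /\ in_image v (fun u => m%:Z * x u).

Definition annihilates_K (r n : nat) (v : 'I_n -> F2vec r) (e : nat) :=
  forall x : F2vec r -> int, is_torsion v x -> in_image v (fun u => e%:Z * x u).

(* e is the exponent (= largest invariant factor c_1) of K(G) *)
Definition sandpile_exponent (r n : nat) (v : 'I_n -> F2vec r) (e : nat) :=
  [/\ (0 < e)%N, annihilates_K v e &
      forall e', (0 < e')%N -> annihilates_K v e' -> (e <= e')%N].

Definition lambda (r n : nat) (v : 'I_n -> F2vec r) (u : F2vec r) : int :=
  n%:Z - \sum_(i < n) (-1) ^+ (dot2 u (v i) == 1).

Definition lcm_lambda (r n : nat) (v : 'I_n -> F2vec r) : nat :=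
  \big[lcmn/1%N]_(u : F2vec r | u != 0) `|lambda v u|%N.

(* Main.v *)
Require Import Defs.
From HB Require Import structures.
From mathcomp Require Import all_boot all_order all_algebra.
From mathcomp Require Import zify ring.
Import Order.TTheory GRing.Theory Num.Theory.
Local Open Scope ring_scope.

Lemma F2_cases (x : 'F_2) : x = 0 \/ x = 1.
Proof. move: x => [[|[|m]] //=] ; auto. left; exact/val_inj. right; exact/val_inj. Qed.

Lemma F2_add_eq1 (x y : 'F_2) : (x + y == 1) = (x == 1) (+) (y == 1).
Proof. by case: (F2_cases x) => ->; case: (F2_cases y) => ->. Qed.

Lemma F2_neq0 (x : 'F_2) : x != 0 -> x = 1.
Proof. by case: (F2_cases x) => ->. Qed.

Lemma F2vec_addvv r (x : F2vec r) : x + x = 0.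
Proof. apply/matrixP => i j; rewrite !mxE. case: (F2_cases (x i j)) => ->; [by rewrite addr0|exact/val_inj]. Qed.

Lemma F2vec_add_eq0 r (x y : F2vec r) : (x + y == 0) = (y == x).
Proof.
rewrite addr_eq0; have -> : - y = y.
  by apply/eqP; rewrite eq_sym -addr_eq0 F2vec_addvv.
by rewrite eq_sym.
Qed.

Lemma dot2C r (u w : F2vec r) : dot2 u w = dot2 w u.
Proof. rewrite /dot2. have -> : w *m u^T = (u *m w^T)^T by rewrite trmx_mul trmxK.
by rewrite [RHS]mxE. Qed.

Lemma dot2Dr r (u w z : F2vec r) : dot2 u (w + z) = dot2 u w + dot2 u z.
Proof. by rewrite /dot2 linearD /= mulmxDr mxE. Qed.

Lemma dot2Dl r (u w z : F2vec r) : dot2 (w + z) u = dot2 w u + dot2 z u.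
Proof. by rewrite /dot2 mulmxDl mxE. Qed.

Lemma dot2_0r r (u : F2vec r) : dot2 u 0 = 0.
Proof. by rewrite /dot2 trmx0 mulmx0 mxE. Qed.

Lemma dot2_0l r (u : F2vec r) : dot2 0 u = 0.
Proof. by rewrite /dot2 mul0mx mxE. Qed.

Lemma dot2_delta r (j : 'I_r) (w : F2vec r) : dot2 (delta_mx 0 j) w = w 0 j.
Proof. by rewrite /dot2 -rowE !mxE. Qed.

Definition sgn (b : bool) : int := (-1) ^+ b.

Lemma card_F2vec r : #|{: F2vec r}| = (2 ^ r)%N.
Proof. by rewrite card_mx card_Fp // mul1n. Qed.

Lemma char_sum r (w : F2vec r) :
  \sum_(u : F2vec r) sgn (dot2 u w == 1) = if w == 0 then (2 ^ r)%N%:Z else 0.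
Proof.
case: eqP => [->|/eqP wn0].
  under eq_bigr do rewrite dot2_0r /sgn /= expr0.
  by rewrite sumr_const card_F2vec natz.
have [j wj] : exists j, w 0 j != 0.
  apply/existsP; apply: contraR wn0; rewrite negb_exists => /forallP H.
  apply/eqP/matrixP => i k; rewrite ord1 !mxE; exact/eqP/negbNE/H.
set S := \sum_u _.
have HS : S = - S.
  rewrite {1}/S (reindex_inj (addIr (delta_mx 0 j))) /= /S -sumrN.
  apply: eq_bigr => u _.
  rewrite dot2Dl dot2_delta (F2_neq0 _ wj) F2_add_eq1 eqxx addbT /sgn.
  by case: (dot2 u w == 1); rewrite /= ?expr0 ?expr1 ?opprK.
lia.
Qed.

Definition ind (b : bool) : int := if b then 1 else 0.

Lemma card_sum n (P : pred 'I_n) : (#|[set i | P i]|)%:Z = \sum_(i < n) ind (P i).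
Proof.
rewrite -sum1dep_card -natz natr_sum big_mkcond /=.
by apply: eq_bigr => i _; case: (P i).
Qed.

Lemma lap_entry r n (v : 'I_n -> F2vec r) (hnz : forall i, v i != 0) (w z : F2vec r) :
  cayley_laplacian v w z = n%:Z * ind (w == z) - \sum_(i < n) ind (w + v i == z).
Proof.
rewrite /cayley_laplacian -card_sum; case: eqP => [<-|_]; last by rewrite mulr0 sub0r.
rewrite mulr1 (_ : #|_| = 0%N) ?subr0 //.
apply/eqP; rewrite cards_eq0; apply/eqP/setP => i; rewrite !inE.
by rewrite -{2}[w]addr0 (inj_eq (@addrI _ w)) (negbTE (hnz i)).
Qed.

Lemma sum_ind_mul r (a : F2vec r) (y : F2vec r -> int) :
  \sum_(z : F2vec r) ind (a == z) * y z = y a.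
Proof.
rewrite (bigD1 a) //= eqxx mul1r big1 ?addr0 // => z /negbTE za.
by rewrite eq_sym za mul0r.
Qed.

Lemma lap_apply r n (v : 'I_n -> F2vec r) (hnz : forall i, v i != 0)
   (y : F2vec r -> int) (w : F2vec r) :
  \sum_z cayley_laplacian v w z * y z = n%:Z * y w - \sum_(i < n) y (w + v i).
Proof.
under eq_bigr do rewrite lap_entry // mulrBl.
rewrite sumrB; congr (_ - _).
  by under eq_bigr do rewrite -mulrA; rewrite -mulr_sumr sum_ind_mul.
under eq_bigr do rewrite mulr_suml.
rewrite exchange_big /=; apply: eq_bigr => i _; exact: sum_ind_mul.
Qed.

Lemma F2vec_eq_sym r (u x w : F2vec r) : (u + x == w) = (w + x == u).
Proof.
by rewrite -F2vec_add_eq0 -[in RHS]F2vec_add_eq0 addrCA.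
Qed.

Lemma lap_sym r n (v : 'I_n -> F2vec r) (u w : F2vec r) :
  cayley_laplacian v u w = cayley_laplacian v w u.
Proof.
rewrite /cayley_laplacian eq_sym; case: eqP => // _.
rewrite (_ : [set i | u + v i == w] = [set i | w + v i == u]) //.
by apply/setP => i; rewrite !inE F2vec_eq_sym.
Qed.

Lemma lap_colsum r n (v : 'I_n -> F2vec r) (hnz : forall i, v i != 0) (w : F2vec r) :
  \sum_u cayley_laplacian v u w = 0.
Proof.
have := @lap_apply _ _ _ hnz (fun _ => 1) w.
under eq_bigr do rewrite mulr1 lap_sym.
by move=> ->; rewrite sumr_const card_ord mulr1 natz subrr.
Qed.

Set Implicit Arguments. Unset Strict Implicit.

Definition kk r n (v : 'I_n -> F2vec r) (u : F2vec r) : nat :=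
  \sum_(i < n) nat_of_bool (dot2 u (v i) == 1%R).

Lemma kk_z r n (v : 'I_n -> F2vec r) u :
  (kk v u)%:Z = \sum_(i < n) ind (dot2 u (v i) == 1).
Proof. by rewrite /kk -natz natr_sum; apply: eq_bigr => i _; case: (_ == 1). Qed.

Lemma sgn_ind b : sgn b = 1 - 2 * ind b.
Proof. by case: b; rewrite /sgn /= ?expr0 ?expr1 //; ring. Qed.

Lemma lambda_eq r n (v : 'I_n -> F2vec r) u : lambda v u = (2 * kk v u)%:Z.
Proof.
rewrite /lambda; under eq_bigr do rewrite -/(sgn _) sgn_ind.
rewrite sumrB sumr_const card_ord -mulr_sumr -kk_z PoszM natz.
ring.
Qed.

Lemma term r n (v : 'I_n -> F2vec r) u b :
  n%:Z * ind b - \sum_(i < n) ind (b (+) (dot2 u (v i) == 1))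
  = (if b then 1 else -1) * (kk v u)%:Z.
Proof.
rewrite kk_z; case: b => /=.
  have -> : \sum_(i < n) ind (~~ (dot2 u (v i) == 1)) =
            \sum_(i < n) (1 - ind (dot2 u (v i) == 1)).
    by apply: eq_bigr => i _; case: (_ == 1); rewrite /= ?subrr ?subr0.
  by rewrite sumrB sumr_const card_ord natz; ring.
by rewrite mulr0 sub0r mulN1r.
Qed.

Definition ycert r (a : F2vec r -> nat) (g h : F2vec r) : int :=
  \sum_(u : F2vec r) ind (dot2 u g == 1) * (a u)%:Z * ind (dot2 u h == 1).

Lemma ind_sgn_2 (b c : bool) : 2 * (ind b * sgn c) = sgn c - sgn (b (+) c).
Proof. by case: b; case: c; rewrite /sgn /= ?expr0 ?expr1. Qed.

Lemma key r n (v : 'I_n -> F2vec r) (hnz : forall i, v i != 0) (hr : (1 <= r)%N)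
  (L2 : nat) (a : F2vec r -> nat)
  (ha : forall u, u != 0 -> (kk v u * a u)%N = L2) (g w : F2vec r) :
  \sum_z cayley_laplacian v w z * ycert a g z
  = (2 ^ (r - 1) * L2)%N%:Z * (ind (w == g) - ind (w == 0)).
Proof.
rewrite lap_apply // /ycert.
have -> : \sum_(i < n) \sum_u ind (dot2 u g == 1) * (a u)%:Z * ind (dot2 u (w + v i) == 1)
   = \sum_u ind (dot2 u g == 1) * (a u)%:Z * \sum_(i < n) ind (dot2 u (w + v i) == 1).
  by rewrite exchange_big; apply: eq_bigr => u _; rewrite mulr_sumr.
rewrite mulr_sumr -sumrB.
have H : forall u, n%:Z * (ind (dot2 u g == 1) * (a u)%:Z * ind (dot2 u w == 1)) -
   ind (dot2 u g == 1) * (a u)%:Z * \sum_(i < n) ind (dot2 u (w + v i) == 1)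
   = - L2%:Z * (ind (dot2 u g == 1) * sgn (dot2 u w == 1)).
  move=> u; case: (boolP (dot2 u g == 1)) => hg; last first.
    by rewrite /= !mul0r mulr0 subrr mulr0.
  have u0 : u != 0 by apply: contraTneq hg => ->; rewrite dot2_0l eq_sym oner_eq0.
  under eq_bigr do rewrite dot2Dr F2_add_eq1.
  rewrite /= !mul1r mulrCA -mulrBr term -(ha u u0) PoszM.
  by case: (dot2 u w == 1); rewrite /sgn /= ?expr0 ?expr1; ring.
rewrite (eq_bigr _ (fun u _ => H u)) -mulr_sumr.
set X := \sum_u _.
have h2X : 2 * X = (2 ^ r)%N%:Z * (ind (w == 0) - ind (w == g)).
  rewrite /X mulr_sumr.
  under eq_bigr do rewrite ind_sgn_2 -F2_add_eq1 -dot2Dr.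
  rewrite sumrB !char_sum F2vec_add_eq0.
  by case: (w == 0); case: (w == g); rewrite /=; ring.
have e2 : (2 ^ r = 2 * 2 ^ (r - 1))%N by rewrite -expnS subn1 prednK.
rewrite e2 PoszM in h2X.
set P := Posz (2 ^ (r - 1)) in h2X *.
have hX : X = P * (ind (w == 0) - ind (w == g)).
  move: h2X; case: (w == 0); case: (w == g); rewrite /= ?mulr0 ?mulr1 ?subr0 ?sub0r ?subrr; lia.
rewrite hX PoszM -/P; ring.
Qed.

From Stdlib Require Import Classical.

Lemma min_ex (P : nat -> Prop) e : P e -> exists e0, P e0 /\ forall e', P e' -> (e0 <= e')%N.
Proof.
move: e; suff: forall N e, (e <= N)%N -> P e -> exists e0, P e0 /\ forall e', P e' -> (e0 <= e')%N.
  by move=> H e; apply: (H e e).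
elim=> [|N IH] e le Pe.
  exists e; split=> // e' _; move: le; rewrite leqn0 => /eqP ->; done.
case: (classic (exists e', (e' < e)%N /\ P e')) => [[e' [lt Pe']]|H].
  apply: (IH e') => //; rewrite -ltnS; exact: leq_trans lt le.
exists e; split=> // e' Pe'; rewrite leqNgt; apply/negP => lt; apply: H; by exists e'.
Qed.

Lemma in_image_ext r n (v : 'I_n -> F2vec r) (x1 x2 : F2vec r -> int) :
  (forall u, x1 u = x2 u) -> in_image v x1 -> in_image v x2.
Proof. move=> e [y hy]; exists y => u; by rewrite -e. Qed.

Lemma in_image_lin r n (v : 'I_n -> F2vec r) (x1 x2 : F2vec r -> int) (c1 c2 : int) :
  in_image v x1 -> in_image v x2 -> in_image v (fun u => c1 * x1 u + c2 * x2 u).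
Proof.
move=> [y1 h1] [y2 h2]; exists (fun w => c1 * y1 w + c2 * y2 w) => u.
rewrite h1 h2 !mulr_sumr -big_split /=; apply: eq_bigr => w _; ring.
Qed.

Lemma torsion_sum0 r n (v : 'I_n -> F2vec r) (hnz : forall i, v i != 0) x :
  is_torsion v x -> \sum_u x u = 0.
Proof.
move=> [m [m0 [y hy]]].
have : m%:Z * \sum_u x u = 0.
  rewrite mulr_sumr (eq_bigr _ (fun u _ => hy u)) exchange_big /=.
  apply: big1 => w _; by rewrite -mulr_suml lap_colsum // mul0r.
move/eqP; rewrite mulf_eq0 => /orP [|/eqP //].
by rewrite eqz_nat => /eqP m00; rewrite m00 in m0.
Qed.

Lemma annihilate_E r n (v : 'I_n -> F2vec r) (hnz : forall i, v i != 0) (hr : (1 <= r)%N)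
  (L2 : nat) (a : F2vec r -> nat)
  (ha : forall u, u != 0 -> (kk v u * a u)%N = L2) :
  annihilates_K v (2 ^ (r - 1) * L2)%N.
Proof.
move=> x tx; have s0 := torsion_sum0 hnz tx.
exists (fun w => \sum_g x g * ycert a g w) => u.
have H : forall g, \sum_w cayley_laplacian v u w * (x g * ycert a g w)
   = x g * ((2 ^ (r - 1) * L2)%N%:Z * (ind (u == g) - ind (u == 0))).
  move=> g; rewrite -(key hnz hr ha g u) mulr_sumr; apply: eq_bigr => w _.
  by rewrite mulrCA.
under eq_bigr do rewrite mulr_sumr.
rewrite exchange_big /= (eq_bigr _ (fun g _ => H g)).
set E := Posz _.
under eq_bigr do rewrite mulrCA mulrBr.
rewrite -mulr_sumr sumrB; congr (_ * _).
rewrite -mulr_suml s0 mul0r subr0.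
under eq_bigr do rewrite mulrC.
by rewrite sum_ind_mul.
Qed.

Lemma kk_pos r n (v : 'I_n -> F2vec r)
  (hgen : forall x : 'rV['F_2]_r, exists S : {set 'I_n}, x = \sum_(i in S) v i)
  (u : F2vec r) : u != 0 -> (0 < kk v u)%N.
Proof.
move=> un0.
have [j uj] : exists j, u 0 j != 0.
  apply/existsP; apply: contraR un0; rewrite negb_exists => /forallP H.
  apply/eqP/matrixP => i k; rewrite ord1 !mxE; exact/eqP/negbNE/H.
have [S hS] := hgen (delta_mx 0 j).
have : dot2 u (delta_mx 0 j) = 1 by rewrite dot2C dot2_delta (F2_neq0 _ uj).
rewrite hS.
case: (boolP [exists i, dot2 u (v i) == 1]) => [/existsP [i hi] _|].
  by rewrite /kk (bigD1 i) //= hi.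
rewrite negb_exists => /forallP H.
have -> : dot2 u (\sum_(i in S) v i) = 0.
  apply: (big_ind (fun x => dot2 u x = 0)); first exact: dot2_0r.
    by move=> x y hx hy; rewrite dot2Dr hx hy addr0.
  move=> i _; have := H i; case: (F2_cases (dot2 u (v i))) => -> //.
by move/eqP; rewrite eq_sym oner_eq0.
Qed.

Unset Implicit Arguments.

Theorem mainTheorem6 (r : nat) (hr : (1 <= r)%N) (n : nat)
  (v : 'I_n -> 'rV['F_2]_r)
  (hnz : forall i, v i != 0)
  (hgen : forall x : 'rV['F_2]_r, exists S : {set 'I_n}, x = \sum_(i in S) v i) :
  (exists e, sandpile_exponent v e) /\
  (forall c1 : nat, sandpile_exponent v c1 ->
     (2 * c1 %| 2 ^ (r - 1) * lcm_lambda v)%N).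
Proof.
have eL : lcm_lambda v = \big[lcmn/1%N]_(u : F2vec r | u != 0) (2 * kk v u)%N.
  by apply: eq_bigr => u _; rewrite lambda_eq.
set L := lcm_lambda v.
have dL : forall u : F2vec r, u != 0 -> (2 * kk v u %| L)%N.
  by move=> u un0; rewrite /L eL; apply: biglcmn_sup (dvdnn _).
have L0 : (0 < L)%N.
  rewrite /L eL; apply: (big_ind (fun x => 0 < x)%N) => //.
    by move=> x y hx hy; rewrite lcmn_gt0 hx hy.
  by move=> u un0; rewrite muln_gt0 kk_pos.
pose u1 : F2vec r := delta_mx 0 (Ordinal hr).
have u10 : u1 != 0.
  apply/eqP => /matrixP /(_ 0 (Ordinal hr)); rewrite !mxE eqxx /= => /eqP.
  by rewrite oner_eq0.
have d2 : (2 %| L)%N := dvdn_trans (dvdn_mulr _ (dvdnn 2)) (dL u1 u10).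
set L2 := (L %/ 2)%N.
have eL2 : L = (2 * L2)%N by rewrite mulnC divnK.
pose a (u : F2vec r) := (L2 %/ kk v u)%N.
have ha : forall u, u != 0 -> (kk v u * a u)%N = L2.
  move=> u un0; rewrite mulnC divnK //.
  by rewrite -(@dvdn_pmul2l 2) // -eL2 dL.
set E := (2 ^ (r - 1) * L2)%N.
have E0 : (0 < E)%N.
  by rewrite muln_gt0 expn_gt0 /=; move: L0; rewrite eL2 muln_gt0.
have annE : annihilates_K v E := annihilate_E hnz hr ha.
have cdiv : forall c1, sandpile_exponent v c1 -> (c1 %| E)%N.
  move=> c1 [c0 annc minc].
  have [p [q hpq]] := Bezoutz c1 E.
  have anng : annihilates_K v (gcdn c1 E).
    move=> x tx.
    apply: (in_image_ext _ (in_image_lin p q (annc x tx) (annE x tx))) => u.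
    rewrite mulrA mulrA -mulrDl; congr (_ * _); rewrite hpq //.
  have := minc _ _ anng; rewrite gcdn_gt0 c0 => /(_ isT) le.
  apply/gcdn_idPl/eqP; rewrite eqn_leq le dvdn_leq ?gcdn_gt0 ?c0 ?dvdn_gcdl //.
split.
  have [e0 [[e00 ann0] mine]] := min_ex (P := fun e => (0 < e)%N /\ annihilates_K v e) (conj E0 annE).
  exists e0; split=> // e' e'0 ann'; apply: mine; by split.
move=> c1 /cdiv hc.
rewrite eL2 mulnCA dvdn_pmul2l //.
Qed.
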